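(* Let $V$ be a real vector space of dimension $n$, let $L\subset V$ be a lattice of rank $n$, and let $P\subset V$ be an $n$-dimensional convex polytope with all vertices in $L$. Let $p$ be a prime and let $k$ be an integer with $1\le k\le n-1$. For every integer $0\le l\le n$ we have \[ c_l\bigl(T(p,k)E(P)\bigr)=\nu_{n,k,l}(p)\,c_l\bigl(E(P)\bigr), \] so that the factor $\nu_{n,k,l}(p)$ is independent of $P$. Moreover, for all such $k$ and $l$, \[ \nu_{n,k,l}(p)/\nu_{n,n-k,n-l}(p)=p^{k+l-n}. \] Finally, for each triple $(n,k,l)$ there is a polynomial $\Phi_{n,k,l}(t)\in\mathbb{Z}[t]$ with positive coefficients (all its nonzero coefficients are positive), independent of $p$, such that $\Phi_{n,k,l}(p)=\nu_{n,k,l}(p)$ for every prime $p$.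
   Context: For a lattice $N\subset V$ of rank $n$ and a polytope $Q$ with vertices in $N$, the Ehrhart polynomial $E_N(Q)\in\mathbb{Q}[t]$ is the polynomial with $E_N(Q)(t)=\#(tQ\cap N)$ for all nonnegative integers $t$; write $E(P)=E_L(P)$. For $f\in\mathbb{Q}[t]$, $c_l(f)$ denotes the coefficient of $t^l$. The lattice $p^{-1}L$ contains $L$ and $p^{-1}L/L\cong\mathbb{F}_p^n$; for a lattice $M$ with $L\subsetneq M\subsetneq p^{-1}L$ let $\overline M=M/L\subset p^{-1}L/L$. Let $\mathscr{L}_k$ be the set of such lattices $M$ with $\dim_{\mathbb{F}_p}\overline M=k$. For $M\in\mathscr{L}_k$, $P_M$ denotes $P$ regarded as a lattice polytope with respect to $M$, so $E(P_M)=E_M(P)$. Define $T(p,k)E(P)=\sum_{M\in\mathscr{L}_k}E(P_M)$. For $0\le l\le n$ and $0\le k\le n$, fix an $l$-dimensional subspace $U\subset\mathbb{F}_p^n$ and set $\nu_{n,k,l}(p)=\sum_{W\subset\mathbb{F}_p^n,\ \dim W=k}p^{\dim(W\cap U)}$ (the value does not depend on the choice of $U$). *)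

(* Defs.v *)
From HB Require Import structures.
From mathcomp Require Import all_boot all_order all_algebra.
From mathcomp Require Import reals.
Set Implicit Arguments. Unset Strict Implicit. Unset Printing Implicit Defensive.
Import Order.TTheory GRing.Theory Num.Theory.
Local Open Scope ring_scope.

(* Coordinates: V = R^n (row vectors), L = Z^n *m B with B invertible.
   Points of L are  z *m B,  points of p^{-1}L are  p^{-1} (z *m B), z in Z^n. *)

Definition card_is (n : nat) (A : 'rV[int]_n -> Prop) (c : nat) : Prop :=
  exists s : seq 'rV[int]_n, [/\ uniq s, (forall x, A x <-> x \in s) & size s = c].

Definition is_ehrhart (n : nat) (A : nat -> 'rV[int]_n -> Prop) (f : {poly rat}) : Prop :=
  forall t : nat, exists2 c : nat, card_is (A t) c & f.[t%:R] = c%:R.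

Section Poly.
Variables (R : realType) (n m : nat) (B : 'M[R]_n) (V : 'I_m -> 'rV[int]_n).

Definition latL (z : 'rV[int]_n) : 'rV[R]_n := map_mx (fun a : int => a%:~R) z *m B.

Definition latp (p : nat) (z : 'rV[int]_n) : 'rV[R]_n := (p%:R)^-1 *: latL z.

Definition vert (i : 'I_m) : 'rV[R]_n := latL (V i).

Definition in_dil (t : nat) (x : 'rV[R]_n) : Prop :=
  exists w : 'I_m -> R,
    [/\ forall i, 0 <= w i, \sum_i w i = t%:R & x = \sum_i w i *: vert i].

Definition full_dim : Prop :=
  exists i0 : 'I_m, \rank (\matrix_(i < m) (vert i - vert i0)) = n.

End Poly.

(* reduction mod p of integer coordinates: z + L |-> class in p^{-1}L/L = F_p^n *)
Definition redp (p n : nat) (z : 'rV[int]_n) : 'rV['F_p]_n :=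
  map_mx (fun a : int => a%:~R) z.

(* k-dimensional subspaces of F_p^n, each represented by its canonical
   square matrix <<W>> (row space) *)
Definition subsp (p n k : nat) : {set 'M['F_p]_n} :=
  [set W : 'M['F_p]_n | (<<W>>%MS == W) && (\rank W == k)].

(* nu_{n,k,l}(p) with the fixed l-dim subspace U = span of first l basis vectors *)
Definition nu (n k l p : nat) : nat :=
  \sum_(W in subsp p n k) p ^ \rank (W :&: (pid_mx l : 'M['F_p]_n))%MS.

(* Main.v *)
Require Import Defs.
From HB Require Import structures.
From mathcomp Require Import all_boot all_order all_algebra.
From mathcomp Require Import ring lra zify.
From mathcomp Require Import reals.
Set Implicit Arguments. Unset Strict Implicit. Unset Printing Implicit Defensive.
Import Order.TTheory GRing.Theory Num.Theory.
Local Open Scope ring_scope.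
Local Open Scope ring_scope.
Lemma PoszXn (a b : nat) : ((a ^ b)%N : int) = (a : int) ^+ b.
Proof. by rewrite -!natz natrX. Qed.

Fixpoint gauss_rec (n k : nat) : {poly int} :=
  match n, k with
  | _, 0%N => 1
  | 0%N, _.+1 => 0
  | n1.+1, k1.+1 => gauss_rec n1 k1 + 'X^(k1.+1) * gauss_rec n1 k1.+1
  end.
Fact gauss_key : unit. Proof. exact: tt. Qed.
Definition gauss := locked_with gauss_key gauss_rec.
Canonical gauss_unlockable := [unlockable fun gauss].

Lemma gaussS0 n : gauss n 0 = 1. Proof. by rewrite unlock; case: n. Qed.
Lemma gauss0S k : gauss 0 k.+1 = 0. Proof. by rewrite unlock. Qed.
Lemma gaussSS n k : gauss n.+1 k.+1 = gauss n k + 'X^(k.+1) * gauss n k.+1.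
Proof. by rewrite unlock. Qed.

Definition Dp (n k : nat) : {poly int} := \prod_(0 <= i < k) ('X^(n - i) - 1).

Lemma Dp_recl n k : Dp n.+1 k.+1 = ('X^(n.+1) - 1) * Dp n k.
Proof. by rewrite /Dp big_nat_recl //; congr (_ * _); apply: eq_bigr => i _; rewrite subSS. Qed.

Lemma Dp_recr n k : Dp n k.+1 = Dp n k * ('X^(n - k) - 1).
Proof. by rewrite /Dp big_nat_recr. Qed.

Lemma Dp_small n k : (n < k)%N -> Dp n k = 0.
Proof.
move=> nk; rewrite /Dp (bigD1_seq n) ?mem_iota ?iota_uniq //=; last by rewrite add0n subn0.
by rewrite subnn expr0 subrr mul0r.
Qed.

Lemma gaussD n k : gauss n k * Dp k k = Dp n k.
Proof.
elim: n k => [|n IH] [|k]; rewrite ?gaussS0 ?gauss0S ?gaussSS.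
- by rewrite mul1r.
- by rewrite mul0r Dp_small.
- by rewrite mul1r /Dp !big_mkord !big_ord0.
rewrite mulrDl -mulrA IH (Dp_recr n k).
have -> : gauss n k * Dp k.+1 k.+1 = ('X^(k.+1) - 1) * Dp n k.
  by rewrite Dp_recl mulrCA IH.
rewrite Dp_recl.
have [kn|nk] := leqP k n.
  have e : 'X^(n.+1) = 'X^(k.+1) * 'X^(n - k) :> {poly int}.
    by rewrite -exprD addSn subnKC.
  rewrite e; ring.
by rewrite Dp_small //; ring.
Qed.

Lemma Dp_eval_neq0 k (x : int) : 1 < x -> (Dp k k).[x] != 0.
Proof.
move=> x1; rewrite /Dp horner_prod prodf_seq_neq0; apply/allP => i.
rewrite mem_iota add0n => /andP[_ ik] /=.
rewrite !hornerE subr_eq0 gt_eqF // exprn_egt1 // subn_eq0 -ltnNge -(subn0 k) //.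
Qed.

Lemma Dp_neq0 k : Dp k k != 0.
Proof.
apply/negP => /eqP e; have := Dp_eval_neq0 k (x := 2) isT.
by rewrite e horner0 eqxx.
Qed.

Lemma gauss_pascal2 n k :
  gauss n.+1 k.+1 * ('X^(k.+1) - 1) = ('X^(n.+1) - 1) * gauss n k.
Proof.
apply: (mulIf (Dp_neq0 k)).
by rewrite -mulrA -Dp_recl gaussD Dp_recl -mulrA gaussD.
Qed.

Lemma Dp_split n k : (k <= n)%N -> Dp n n = Dp n k * Dp (n - k) (n - k).
Proof.
move=> kn; rewrite /Dp (big_cat_nat (leq0n k) kn) /=; congr (_ * _).
rewrite -{1}[k]add0n big_addn; apply: eq_bigr => i _; by rewrite addnC subnDA.
Qed.

Lemma gauss_sym n k : (k <= n)%N -> gauss n k = gauss n (n - k).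
Proof.
move=> kn; apply: (mulIf (Dp_neq0 k)); apply: (mulIf (Dp_neq0 (n - k))).
rewrite gaussD -Dp_split // -mulrA [Dp k k * _]mulrC mulrA gaussD.
by rewrite (Dp_split (leq_subr k n)) subKn.
Qed.

Lemma gauss_ge0 n k i : 0 <= (gauss n k)`_i.
Proof.
elim: n k i => [|n IH] [|k] i; rewrite ?gaussS0 ?gauss0S ?gaussSS.
- by rewrite coefC; case: (i == 0%N).
- by rewrite coef0.
- by rewrite coefC; case: (i == 0%N).
rewrite coefD coefXnM addr_ge0 //; case: ifP => // _.
Qed.
Section Counting.
Variable F : finFieldType.
Local Notation q := #|F|.

Lemma card_fr m n : (m <= n)%N ->
  #|[pred A : 'M[F]_(m, n) | \rank A == m]| = (\prod_(i < m) (q ^ n - q ^ i))%N.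
Proof.
pose fr m := [pred A : 'M[F]_(m, n) | \rank A == m].
rewrite -/(fr m).
elim: m => [_ | m IHm /ltnW-le_mn].
  rewrite big_ord0 (@eq_card1 _ (0%R : 'M_(0, n))) //= => A.
  by rewrite flatmx0 !inE mxrank.unlock !eqxx.
rewrite big_ord_recr /= -{}IHm //.
rewrite -sum_nat_const /= -sum1_card -add1n.
rewrite (partition_big dsubmx (fr m)) /= => [|A]; last first.
  rewrite !inE -{1}(vsubmxK A); move: {A}(_ A) (_ A) => Ad Au Afull.
  rewrite eqn_leq rank_leq_row -(leq_add2l (\rank Au)) -mxrank_sum_cap.
  rewrite {1 3}[@mxrank]lock addsmxE (eqnP Afull) -lock -addnA.
  by rewrite leq_add ?rank_leq_row ?leq_addr.
apply: eq_bigr => A rAm; rewrite (reindex (col_mx^~ A)) /=; last first.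
  exists usubmx => [v _ | vA]; first by rewrite col_mxKu.
  by case/andP=> _ /eqP <-; rewrite vsubmxK.
transitivity #|~: [set v *m A | v in 'rV_m]|; last first.
  rewrite cardsCs setCK card_imset ?card_mx ?card_ord ?mul1n //.
  have [B AB1] := row_freeP rAm; apply: can_inj (mulmx^~ B) _ => v.
  by rewrite -mulmxA AB1 mulmx1.
rewrite -sum1_card; apply: eq_bigl => v; rewrite !inE col_mxKd eqxx.
rewrite andbT eqn_leq rank_leq_row /= -(leq_add2r (\rank (v :&: A)%MS)).
rewrite -addsmxE mxrank_sum_cap (eqnP rAm) addnAC leq_add2r.
rewrite (ltn_leqif (mxrank_leqif_sup _)) ?capmxSl // sub_capmx submx_refl.
by congr (~~ _); apply/submxP/imsetP=> [] [u]; exists u.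
Qed.


Lemma card_subrV m n (X : 'M[F]_(m, n)) :
  #|[set v : 'rV[F]_n | (v <= X)%MS]| = (q ^ \rank X)%N.
Proof.
have -> : [set v : 'rV[F]_n | (v <= X)%MS] = [set u *m row_base X | u in 'rV_(\rank X)].
  apply/setP => v; rewrite inE -(eq_row_base X).
  by apply/submxP/imsetP => [[u ->] | [u _ ->]]; exists u.
rewrite card_imset ?card_mx ?mul1n //; exact: row_free_inj (row_base_free X).
Qed.

Definition Sk n k := [set W : 'M[F]_n | (<<W>>%MS == W) && (\rank W == k)].

Lemma Sk_basis n k W : W \in Sk n k ->
  exists B : 'M[F]_(k, n), (\rank B == k) && (<<B>>%MS == W).
Proof.
rewrite inE => /andP[/eqP gW /eqP rW].
have: exists B : 'M[F]_(\rank W, n), (\rank B == \rank W) && (<<B>>%MS == W).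
  exists (row_base W); rewrite (eqnP (row_base_free W)) eqxx /=.
  by apply/eqP; apply: etrans gW; apply/eq_genmx/eq_row_base.
by rewrite rW.
Qed.

Lemma card_Sk n k : (k <= n)%N ->
  (#|Sk n k| * #|[pred A : 'M[F]_k | \rank A == k]|)%N
   = #|[pred A : 'M[F]_(k, n) | \rank A == k]|.
Proof.
move=> kn; symmetry.
rewrite -[X in X = _]sum1_card (partition_big (fun A => <<A>>%MS) (mem (Sk n k))) /=; last first.
  by move=> A rA; rewrite inE genmx_id mxrank_gen eqxx.
rewrite -sum_nat_const; apply: eq_bigr => W SW.
have [B /andP[rB /eqP gB]] := Sk_basis SW.
rewrite -sum1_card.
rewrite (reindex_onto (fun M : 'M[F]_k => M *m B) (fun A => A *m pinvmx B)) /=; last first.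
  move=> A /andP[_ /eqP gA]; apply: mulmxKpV.
  by rewrite -genmxE gA -gB genmxE.
apply: eq_bigl => M; rewrite !inE mxrankMfree //.
case rM: (\rank M == k) => //=.
have ->: <<M *m B>>%MS = <<B>>%MS by apply/eq_genmx/eqmxMfull.
rewrite gB eqxx /=.
by apply/eqP/(row_free_inj rB); rewrite mulmxKpV // submxMl.
Qed.


Definition Av n k (v : 'rV[F]_n) := #|[set W in Sk n k | (v <= W)%MS]|.

Lemma Av_le n k (v : 'rV[F]_n) M : M \in unitmx -> (Av k v <= Av k (v *m M))%N.
Proof.
move=> uM; have fM : row_free M by rewrite row_free_unit.
rewrite /Av -(@card_in_imset _ _ (fun W => <<W *m M>>%MS)).
  apply: subset_leq_card; apply/subsetP => x /imsetP[W WS ->]; move: WS.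
  rewrite !inE => /andP[/andP[_ /eqP rW] vW].
  by rewrite genmx_id eqxx mxrank_gen mxrankMfree // rW eqxx /= genmxE submxMfree.
move=> W1 W2; rewrite !inE => /andP[/andP[/eqP g1 _] _] /andP[/andP[/eqP g2 _] _].
move/genmxP; rewrite !submxMfree // => /genmxP; by rewrite g1 g2.
Qed.

Lemma Av_eq n k (v : 'rV[F]_n) M : M \in unitmx -> Av k v = Av k (v *m M).
Proof.
move=> uM; apply/eqP; rewrite eqn_leq Av_le //=.
by rewrite -{2}[v](mulmxK uM) Av_le ?unitmx_inv.
Qed.

Lemma Av_eqmx n k (u v : 'rV[F]_n) : (u :=: v)%MS -> Av k u = Av k v.
Proof. by move=> e; apply: eq_card => W; rewrite !inE e. Qed.

Lemma Av_nz n k (v : 'rV[F]_n) : v != 0 -> Av k v = Av k (pid_mx 1 : 'rV[F]_n).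
Proof.
move=> nzv.
have e : v = col_ebase v *m (pid_mx 1 *m row_ebase v).
  by rewrite mulmxA -{1}(mulmx_ebase v) rank_rV nzv.
rewrite e (Av_eqmx k (eqmxMfull (pid_mx 1 *m row_ebase v) _)); last by rewrite row_full_unit col_ebase_unit.
by rewrite -Av_eq // row_ebase_unit.
Qed.

Lemma Av0 n k : Av k (0 : 'rV[F]_n) = #|Sk n k|.
Proof. by apply: eq_card => W; rewrite !inE sub0mx andbT. Qed.

Lemma cardsum (T : finType) (P : pred T) : #|[set x | P x]| = (\sum_x (P x : nat))%N.
Proof.
rewrite -sum1_card big_mkcond; apply: eq_bigr => x _; rewrite inE; by case: (P x).
Qed.

Lemma sum_Av n k (U : 'M[F]_n) :
  (\sum_(W in Sk n k) q ^ \rank (W :&: U)%MS)%N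
   = (\sum_(v : 'rV[F]_n | (v <= U)%MS) Av k v)%N.
Proof.
under eq_bigr => W _ do rewrite -card_subrV cardsum.
rewrite exchange_big /= [RHS]big_mkcond /=; apply: eq_bigr => v _.
rewrite /Av cardsum.
case vU: (v <= U)%MS.
  rewrite big_mkcond /=; apply: eq_bigr => W _; rewrite sub_capmx vU andbT inE.
  by case: (_ && _).
by apply: big1 => W _; rewrite sub_capmx vU andbF.
Qed.


Lemma sum_Av_U n k (U : 'M[F]_n) :
  (\sum_(W in Sk n k) q ^ \rank (W :&: U)%MS)%N
   = (#|Sk n k| + (q ^ \rank U - 1) * Av k (pid_mx 1 : 'rV[F]_n))%N.
Proof.
rewrite sum_Av (bigD1 0) ?sub0mx //= Av0; congr (_ + _)%N.
rewrite (eq_bigr (fun _ => Av k (pid_mx 1 : 'rV[F]_n))); last first.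
  by move=> v /andP[_ nz]; rewrite Av_nz.
rewrite sum_nat_const; congr (_ * _)%N.
rewrite -card_subrV [in RHS](cardD1 0) !inE sub0mx add1n subn1 /=.
by apply: eq_card => v; rewrite !inE andbC.
Qed.

Lemma sum_Av_all n k : (k <= n)%N ->
  (#|Sk n k| * q ^ k)%N = (#|Sk n k| + (q ^ n - 1) * Av k (pid_mx 1 : 'rV[F]_n))%N.
Proof.
move=> kn; have := sum_Av_U k (1%:M : 'M[F]_n); rewrite mxrank1 => <-; rewrite -sum_nat_const.
apply: eq_bigr => W; rewrite inE => /andP[_ /eqP rW].
by rewrite capmx1 rW.
Qed.


Lemma q_gt1 : (1 < q)%N.
Proof. exact: card_finNzRing_gt1. Qed.

Lemma prod_fr k n : (k <= n)%N ->
  ((\prod_(i < k) (q ^ n - q ^ i))%N : int)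
   = (\prod_(i < k) (q%:Z ^+ i)) * (Dp n k).[q%:Z].
Proof.
move=> kn; rewrite /Dp horner_prod big_mkord -natz natr_prod -big_split /=.
apply: eq_bigr => i _; have ik := ltn_ord i.
have iln : (i <= n)%N by apply: leq_trans (ltnW ik) kn.
rewrite natrB ?leq_pexp2l ?(ltnW q_gt1) // !hornerE !natrX.
by rewrite !natz mulrBr mulr1 -exprD subnKC.
Qed.

Lemma G_gauss n k : (k <= n)%N -> (#|Sk n k|%:Z) = (gauss n k).[q%:Z].
Proof.
move=> kn; have h := card_Sk kn; rewrite !card_fr // in h.
have /(congr1 (fun m : nat => m%:Z)) := h.
rewrite PoszM !prod_fr // -(gaussD n k) hornerM.
set P := \prod_(i < k) _; set D := (Dp k k).[_]; set g := (gauss n k).[_].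
have PD : P * D != 0.
  rewrite mulf_neq0 ?Dp_eval_neq0 ?ltz_nat ?q_gt1 //.
  apply/prodf_neq0 => i _; rewrite expf_neq0 //.
  by rewrite -lt0n (ltn_trans _ q_gt1).
by move=> e; apply: (mulIf PD); rewrite e; ring.
Qed.


Lemma A_gauss n k : (k <= n)%N ->
  (Av k.+1 (pid_mx 1 : 'rV[F]_n.+1))%:Z = (gauss n k).[q%:Z].
Proof.
move=> kn; have h := (@sum_Av_all n.+1 k.+1 kn).
have /(congr1 (fun m : nat => m%:Z)) := h.
rewrite PoszD !PoszM -subzn ?expn_gt0 ?(ltn_trans _ q_gt1) // G_gauss // !PoszXn.
have e : (gauss n.+1 k.+1 * ('X^(k.+1) - 1)).[q%:Z] = (('X^(n.+1) - 1) * gauss n k).[q%:Z].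
  by rewrite gauss_pascal2.
move: e; rewrite !hornerE.
set g1 := (gauss n.+1 k.+1).[_]; set g0 := (gauss n k).[_]; set A := (Av _ _)%:Z.
move=> e1 e2.
have nz : (q%:Z ^+ n.+1 - 1) != 0.
  by rewrite subr_eq0 gt_eqF // exprn_egt1 // ltz_nat q_gt1.
apply: (mulIf nz).
rewrite [RHS]mulrC -e1; lra.
Qed.

End Counting.

Lemma nu_formula p n k l : prime p -> (k <= n)%N -> (l <= n.+1)%N ->
  (nu n.+1 k.+1 l p : int)
  = p%:Z ^+ l * (gauss n k).[p%:Z] + p%:Z ^+ k.+1 * (gauss n k.+1).[p%:Z].
Proof.
move=> pr kn ln.
have cF : #|'F_p| = p := card_Fp pr.
have h := @sum_Av_U 'F_p n.+1 k.+1 (pid_mx l).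
have hG := @G_gauss 'F_p n.+1 k.+1 kn.
have hA := @A_gauss 'F_p n k kn.
rewrite cF in h hG hA.
rewrite /nu.
have -> : subsp p n.+1 k.+1 = Sk 'F_p n.+1 k.+1 by [].
rewrite h rank_pid_mx // PoszD PoszM -subzn ?expn_gt0 ?prime_gt0 // hG hA PoszXn.
rewrite gaussSS hornerD hornerM hornerXn; ring.
Qed.

Lemma gauss_eval_ge0 n k (x : int) : 0 <= x -> 0 <= (gauss n k).[x].
Proof.
move=> x0; elim: n k => [|n IH] [|k]; rewrite ?gaussS0 ?gauss0S ?gaussSS ?hornerE //.
by rewrite addr_ge0 ?mulr_ge0 ?exprn_ge0 ?IH.
Qed.

Lemma gauss_eval_ge1 n k (x : int) : 1 <= x -> (k <= n)%N -> 1 <= (gauss n k).[x].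
Proof.
move=> x1; elim: n k => [|n IH] [|k] //; rewrite ?gaussS0 ?gauss0S ?gaussSS ?hornerE //.
move=> kn; apply: le_trans (IH k kn) _; rewrite lerDl mulr_ge0 ?exprn_ge0 ?gauss_eval_ge0 //.
  by apply: le_trans x1.
by apply: le_trans x1.
Qed.


Lemma part3 n k l : (0 < k < n)%N -> (l <= n)%N ->
  exists Phi : {poly int},
    (forall i, Phi`_i != 0 -> 0 < Phi`_i) /\
    (forall q : nat, prime q -> Phi.[q%:Z] = (nu n k l q)%:Z).
Proof.
case: n => [|n]; first by rewrite andbF.
case: k => [|k]; first by case/andP.
move=> /andP[_ kn] ln.
exists ('X^l * gauss n k + 'X^(k.+1) * gauss n k.+1); split.
  move=> i nz; rewrite lt_def nz andTb coefD !coefXnM.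
  apply: addr_ge0; [case: (i < l)%N | case: (i < k.+1)%N]; rewrite ?gauss_ge0 ?lexx; exact: isT.
move=> q pr; rewrite nu_formula; [|exact: pr|exact: ltnW kn|exact: ln].
by rewrite hornerD !hornerM !hornerXn.
Qed.

Lemma part2 n k l p : prime p -> (0 < k < n)%N -> (l <= n)%N ->
  (nu n k l p)%:R / (nu n (n - k) (n - l) p)%:R
    = (p%:R : rat) ^ ((k + l)%:Z - n%:Z).
Proof.
move=> pr; case: n => [|n]; first by rewrite andbF.
case: k => [|k]; first by case/andP.
move=> /andP[_ kn] ln.
have kn' : (k <= n)%N := ltnW kn.
have e1 : (n.+1 - k.+1 = (n - k.+1).+1)%N by lia.
have h1 := nu_formula pr kn' ln.
have h2 := @nu_formula p n (n - k.+1) (n.+1 - l) pr (leq_subr _ _) (leq_subr _ _).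
rewrite (gauss_sym (leq_subr k.+1 n)) subKn // in h2.
have e2 : ((n - k.+1).+1 = n - k)%N by lia.
rewrite e2 -(gauss_sym kn') -e2 -e1 in h2.
set g0 := (gauss n k).[p%:Z] in h1 h2.
set g1 := (gauss n k.+1).[p%:Z] in h1 h2.
set nu1 := nu n.+1 k.+1 l p in h1 *.
set nu2 := nu n.+1 (n.+1 - k.+1) (n.+1 - l) p in h2 *.
have p1 : 1 <= p%:Z by rewrite lez_nat prime_gt0.
have g0ge : 1 <= g0 := gauss_eval_ge1 p1 kn'.
have g1ge : 0 <= g1 := gauss_eval_ge0 n k.+1 (le_trans ler01 p1).
have pX : forall m, 1 <= p%:Z ^+ m by move=> m; rewrite exprn_ege1.
have nu2ge : 1 <= (nu2 : int).
  have B1 : 1 <= p%:Z ^+ (n.+1 - k.+1) * g0.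
    by rewrite -[1]mulr1 ler_pM ?pX ?ler01.
  have A0 : 0 <= p%:Z ^+ (n.+1 - l) * g1.
    by rewrite mulr_ge0 // (le_trans ler01 (pX _)).
  rewrite h2; lra.
have hZ : (nu2 : int) * p%:Z ^+ (k.+1 + l) = p%:Z ^+ n.+1 * nu1.
  have E1 : p%:Z ^+ (n.+1 - l) * p%:Z ^+ (k.+1 + l) = p%:Z ^+ n.+1 * p%:Z ^+ k.+1.
    by rewrite -!exprD; congr (_ ^+ _); lia.
  have E2 : p%:Z ^+ (n.+1 - k.+1) * p%:Z ^+ (k.+1 + l) = p%:Z ^+ n.+1 * p%:Z ^+ l.
    by rewrite -!exprD; congr (_ ^+ _); lia.
  rewrite h1 h2.
  transitivity (g1 * (p%:Z ^+ (n.+1 - l) * p%:Z ^+ (k.+1 + l))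
              + g0 * (p%:Z ^+ (n.+1 - k.+1) * p%:Z ^+ (k.+1 + l))); first by ring.
  rewrite E1 E2; ring.
have hN : (nu2 * p ^ (k.+1 + l) = p ^ n.+1 * nu1)%N.
  by apply/eqP; rewrite -eqz_nat !PoszM !PoszXn hZ.
have hQ := congr1 (fun m : nat => m%:R : rat) hN.
rewrite /= !natrM !natrX in hQ.
have pnz : (p%:R : rat) != 0 by rewrite pnatr_eq0 -lt0n prime_gt0.
rewrite expfzDr // -exprnN.
have nu2nz : (nu2%:R : rat) != 0.
  by rewrite pnatr_eq0 -lt0n -ltz_nat (lt_le_trans ltr01 nu2ge).
have -> : (p%:R : rat) ^ (k.+1 + l)%N = (p%:R : rat) ^+ (k.+1 + l) by [].
apply/eqP; rewrite eqr_div ?expf_neq0 //.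
by apply/eqP; rewrite mulrC -hQ mulrC.
Qed.

Lemma intr_Fp_eq0 p (a : int) : prime p -> ((a%:~R : 'F_p) == 0) = (p%:Z %| a)%Z.
Proof.
move=> pr; rewrite dvdzE /= (dvdn_pcharf (pchar_Fp pr)).
case: a => a.
  by [].
by rewrite NegzE mulrNz oppr_eq0.
Qed.

Lemma redp0_div p n (z : 'rV[int]_n) : prime p ->
  map_mx (fun a : int => (a%:~R : 'F_p)) z = 0 ->
  z = p%:Z *: \matrix_(i, j) (z i j %/ p%:Z)%Z.
Proof.
move=> pr /matrixP e; apply/matrixP => i j; have := e i j; rewrite !mxE => /eqP.
by rewrite intr_Fp_eq0 // => /divzK; rewrite mulrC.
Qed.

Section Part1.
Variables (R : realType) (n m : nat) (B : 'M[R]_n) (V : 'I_m -> 'rV[int]_n).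

Lemma in_dil_scale (p t : nat) (y : 'rV[R]_n) : (0 < p)%N ->
  in_dil B V t ((p%:R)^-1 *: y) <-> in_dil B V (p * t) y.
Proof.
move=> p0; have pnz : (p%:R : R) != 0 by rewrite pnatr_eq0 -lt0n.
split=> [[w [w0 ws yw]] | [w [w0 ws yw]]].
  exists (fun i => p%:R * w i); split.
  - by move=> i; rewrite mulr_ge0 ?ler0n.
  - by rewrite -mulr_sumr ws natrM.
  - rewrite -[y](scalerKV pnz) yw scaler_sumr; apply: eq_bigr => i _.
    by rewrite scalerA.
exists (fun i => (p%:R)^-1 * w i); split.
- by move=> i; rewrite mulr_ge0 ?invr_ge0 ?ler0n.
- by rewrite -mulr_sumr ws natrM mulKf.
- by rewrite yw scaler_sumr; apply: eq_bigr => i _; rewrite scalerA.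
Qed.

Lemma latL_scale (p : nat) (z : 'rV[int]_n) :
  latL B (p%:Z *: z) = p%:R *: latL B z.
Proof.
rewrite /latL scalemxAl; congr (_ *m _); apply/matrixP => i j.
by rewrite !mxE intrM.
Qed.


Lemma latp_scale (p : nat) (z : 'rV[int]_n) : (0 < p)%N ->
  latp B p (p%:Z *: z) = latL B z.
Proof.
move=> p0; rewrite /latp latL_scale scalerA mulVf ?scale1r //.
by rewrite pnatr_eq0 -lt0n.
Qed.

Lemma sum_Av_seq p k (s : seq 'rV[int]_n) :
  (\sum_(z <- s) Av k (redp p z))%N =
  (#|Sk 'F_p n k| * count (fun z => redp p z == 0%R) s
   + Av k (pid_mx 1 : 'rV['F_p]_n) * count (fun z => redp p z != 0%R) s)%N.
Proof.
elim: s => [|z s IH]; first by rewrite big_nil !muln0.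
rewrite big_cons IH /=; have [r0|nz] := eqVneq (redp p z) 0.
  rewrite r0 Av0 /= add1n add0n mulnS addnA; reflexivity.
by rewrite Av_nz // /= add0n add1n mulnS addnCA.
Qed.

Lemma count_step p k (E : {poly rat}) (EM : 'M['F_p]_n -> {poly rat}) (t : nat) :
  prime p ->
  is_ehrhart (fun t z => in_dil B V t (latL B z)) E ->
  (forall W, W \in subsp p n k ->
     is_ehrhart (fun t z => (redp p z <= W)%MS /\ in_dil B V t (latp B p z)) (EM W)) ->
  (\sum_(W in subsp p n k) EM W).[t%:R]
   = (Av k (pid_mx 1 : 'rV['F_p]_n))%:R * E.[(p * t)%:R]
     + ((#|Sk 'F_p n k|)%:R - (Av k (pid_mx 1 : 'rV['F_p]_n))%:R) * E.[t%:R].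
Proof.
move=> pr HE HEM.
have p0 := prime_gt0 pr.
have [cT [sT [uT memT szT]] ET] := HE (p * t)%N.
have [c0 [s0 [u0 mem0 sz0]] E0] := HE t.
have memT' : forall z, in_dil B V t (latp B p z) <-> z \in sT.
  by move=> z; rewrite -memT /latp; apply: in_dil_scale.
have hW : forall W, W \in subsp p n k ->
    (EM W).[t%:R] = (count (fun z => redp p z <= W)%MS sT)%:R.
  move=> W WS; have [cW [sW [uW memW szW]] EW] := HEM W WS t.
  rewrite EW -szW -size_filter; congr (_%:R); apply: perm_size.
  apply: uniq_perm => // [|z]; first exact: filter_uniq.
  rewrite mem_filter; apply/idP/andP => [/memW [h1 /memT' h2] | [h1 /memT' h2]].
    by split.
  by apply/memW.
rewrite horner_sum (eq_bigr _ hW) -natr_sum.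
have -> : (\sum_(W in subsp p n k) count (fun z => redp p z <= W)%MS sT)%N
        = (\sum_(z <- sT) Av k (redp p z))%N.
  under eq_bigr => W _ do rewrite -sum1_count big_mkcond /=.
  rewrite exchange_big /=; apply: eq_bigr => z _.
  rewrite /Av -sum1_card big_mkcond /= [in RHS]big_mkcond /=.
  by apply: eq_bigr => W _; rewrite !inE; case: (_ && _); case: (redp p z <= W)%MS.
rewrite sum_Av_seq.
have c0E : count (fun z => redp p z == 0) sT = c0.
  rewrite -size_filter -sz0 -(size_map (fun z => p%:Z *: z) s0).
  apply: perm_size; apply: uniq_perm.
  - exact: filter_uniq.
  - rewrite map_inj_uniq // => a b /matrixP e; apply/matrixP => i j.
    have := e i j; rewrite !mxE => /mulfI; apply.
    by rewrite eqz_nat -lt0n.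
  move=> z; rewrite mem_filter; apply/andP/mapP => [[/eqP r0 /memT' zT] | [z' z'0 ->]].
    have ez := redp0_div pr r0.
    exists (\matrix_(i, j) (z i j %/ p%:Z)%Z) => //.
    by apply/mem0; rewrite -(latp_scale _ p0) -ez.
  split.
    apply/eqP/matrixP => i j; rewrite !mxE intrM.
    by apply/eqP; rewrite mulf_eq0 intr_Fp_eq0 // dvdzz.
  by apply/memT'; rewrite latp_scale //; apply/mem0.
have cT_le : (c0 <= cT)%N by rewrite -c0E -szT count_size.
have c1E : count (fun z => redp p z != 0) sT = (cT - c0)%N.
  by rewrite -c0E -szT -(count_predC (fun z => redp p z == 0) sT) addKn.
rewrite c0E c1E ET E0 natrD !natrM natrB //.
ring.
Qed.

End Part1.

Lemma poly_eq_nat (P Q : {poly rat}) :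
  (forall t : nat, P.[t%:R] = Q.[t%:R]) -> P = Q.
Proof.
move=> h; apply/eqP; rewrite -subr_eq0; apply/negPn/negP => nz.
set rs := [seq (i%:R : rat) | i <- iota 0 (size (P - Q))].
have H1 : all (root (P - Q)) rs.
  apply/allP => x /mapP [i _ ->]; by rewrite /root hornerD hornerN h subrr.
have H2 : uniq rs.
  rewrite map_inj_uniq ?iota_uniq // => a b /eqP; rewrite eqr_nat => /eqP //.
have := max_poly_roots nz H1 H2.
by rewrite size_map size_iota ltnn.
Qed.

Definition Escale (p : nat) (E : {poly rat}) : {poly rat} :=
  \poly_(i < size E) ((p%:R)^+i * E`_i).

Lemma Escale_eval p E x : (Escale p E).[x] = E.[p%:R * x].
Proof.
rewrite horner_poly horner_coef; apply: eq_bigr => i _.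
by rewrite exprMn; ring.
Qed.

Lemma Escale_coef p E l : (Escale p E)`_l = (p%:R)^+l * E`_l.
Proof.
rewrite coef_poly; case: ltnP => // h.
by rewrite nth_default // mulr0.
Qed.

Unset Implicit Arguments.

Theorem theorem1p1 (R : realType) (n m : nat) (B : 'M[R]_n)
  (V : 'I_m -> 'rV[int]_n) (p k : nat) :
  B \in unitmx -> full_dim B V -> prime p -> (0 < k < n)%N ->
  forall (E : {poly rat}) (EM : 'M['F_p]_n -> {poly rat}),
  is_ehrhart (fun t z => in_dil B V t (latL B z)) E ->
  (forall W, W \in subsp p n k ->
     is_ehrhart (fun t z => (redp p z <= W)%MS /\ in_dil B V t (latp B p z)) (EM W)) ->
  [/\ forall l : nat, (l <= n)%N ->
        (\sum_(W in subsp p n k) EM W)`_l = (nu n k l p)%:R * E`_l,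
      forall l : nat, (l <= n)%N ->
        (nu n k l p)%:R / (nu n (n - k) (n - l) p)%:R
          = (p%:R : rat) ^ ((k + l)%:Z - n%:Z)
    & forall l : nat, (l <= n)%N ->
        exists Phi : {poly int},
          (forall i, Phi`_i != 0 -> 0 < Phi`_i) /\
          (forall q : nat, prime q -> Phi.[q%:Z] = (nu n k l q)%:Z)].
Proof.
move=> Bu fd pr kk E EM HE HEM.
split; last first.
- by move=> l ln; apply: part3.
- by move=> l ln; apply: part2.
move=> l ln.
set A := Av k (pid_mx 1 : 'rV['F_p]_n).
set G := #|Sk 'F_p n k|.
have eqS : \sum_(W in subsp p n k) EM W = A%:R *: Escale p E + (G%:R - A%:R) *: E.
  apply: poly_eq_nat => t.
  rewrite (count_step t pr HE HEM) hornerD !hornerZ Escale_eval natrM.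
  by [].
rewrite eqS coefD !coefZ Escale_coef.
have h := @sum_Av_U 'F_p n k (pid_mx l).
rewrite card_Fp // rank_pid_mx // in h.
have -> : nu n k l p = (G + (p ^ l - 1) * A)%N.
  by rewrite /nu -h.
rewrite natrD natrM natrB ?expn_gt0 ?prime_gt0 // natrX.
ring.
Qed.
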